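(* Let $\mathscr J,\mathcal K\subseteq\{1,\dots,n\}$, let $\Delta$ be the simplicial complex with facets $\mathscr J$ and $\mathcal K$, and let $i\in\mathscr J\cap\mathcal K$. Then $$L_{\mathcal K\setminus\{i\}}\cdot L_{\mathscr J}\subseteq P_\Delta R+L_{\mathscr J\setminus\{i\}}.$$
   Context: $\mathbb K$ is a field, $R=\mathbb K[x_{i_1,\dots,i_n}:1\le i_j\le a_j]$. For a tuple $\sigma$ with $\sigma_j\in\{1,\dots,a_j\}\cup\{+\}$, $x_\sigma$ is the sum of all $x_{i_1,\dots,i_n}$ with $i_j=\sigma_j$ whenever $\sigma_j\ne+$. For $\mathscr J\subseteq\{1,\dots,n\}$, $L_{\mathscr J}$ is the ideal of $R$ generated by all $x_\sigma$ with $\sigma_j\in\{1,\dots,a_j\}$ for $j\in\mathscr J$ and $\sigma_j=+$ for $j\notin\mathscr J$ (the entries of the $\mathscr J$-margin of the generic table). $S_\Delta$ is the polynomial ring over $\mathbb K$ in variables $X_\sigma$ for tuples $\sigma$ with $\sigma_j\in\{1,\dots,a_j\}\cup\{\bullet\}$ and $\{j:\sigma_j\ne\bullet\}\in\Delta$. $\tau_\Delta:S_\Delta\to R$ sends $X_\sigma\mapsto x_{\sigma''}$ ($\bullet$ replaced by $+$). $\sigma_\Delta:S_\Delta\to\mathbb K[y_{j,i}:1\le j\le n,1\le i\le a_j]$ sends $X_\sigma\mapsto\prod_jy_{j,\sigma_j}$ with $y_{j,\bullet}$ read as $\sum_iy_{j,i}$; $P_\Delta=\ker\sigma_\Delta$,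 and $P_\Delta R$ is the ideal of $R$ generated by $\tau_\Delta(P_\Delta)$. *)

(* Defs.v *)
From HB Require Import structures.
From mathcomp Require Import all_boot all_order all_algebra.
From mathcomp Require Import mpoly.
Set Implicit Arguments. Unset Strict Implicit. Unset Printing Implicit Defensive.
Import GRing.Theory.
Local Open Scope ring_scope.

Definition ideal_gen (S : comNzRingType) (G : S -> Prop) (f : S) : Prop :=
  exists s : seq (S * S), (forall pr, pr \in s -> G pr.2) /\
                          f = \sum_(pr <- s) pr.1 * pr.2.

Definition ideal_add (S : comNzRingType) (I J : S -> Prop) : S -> Prop :=
  ideal_gen (fun f => I f \/ J f).

Definition ideal_mul (S : comNzRingType) (I J : S -> Prop) : S -> Prop :=
  ideal_gen (fun f => exists g h, [/\ I g, J h & f = g * h]).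

Definition ideal_sub (S : comNzRingType) (I J : S -> Prop) : Prop :=
  forall f, I f -> J f.

(* Indices i_j in {1..a_j} are encoded 0-based as 'I_(a j); j in {1..n} as 'I_n. *)
Section Tables.
Variables (F : fieldType) (n : nat) (a : 'I_n -> nat).

Definition cell : finType := {dffun forall j : 'I_n, 'I_(a j)}.
(* tuples sigma with sigma_j in {1..a_j} u {+}; None stands for + (or bullet) *)
Definition mtuple : finType := {dffun forall j : 'I_n, option 'I_(a j)}.

Definition Rring := {mpoly F[#|cell|]}.
Definition xvar (c : cell) : Rring := 'X_(enum_rank c).

Definition xsum (s : mtuple) : Rring :=
  \sum_(c : cell | [forall j, if s j is Some k then c j == k else true]) xvar c.

Definition supp (s : mtuple) : {set 'I_n} := [set j | s j != None].

Definition Lideal (J : {set 'I_n}) : Rring -> Prop :=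
  ideal_gen (fun f => exists s : mtuple, supp s = J /\ f = xsum s).

(* Delta = simplicial complex with facets J and K *)
Definition face2 (J K : {set 'I_n}) (A : {set 'I_n}) : bool :=
  (A \subset J) || (A \subset K).

Definition Svars (J K : {set 'I_n}) : finType := {s : mtuple | face2 J K (supp s)}.
Definition Sring (J K : {set 'I_n}) := {mpoly F[#|Svars J K|]}.

Definition yidx : finType := {j : 'I_n & 'I_(a j)}.
Definition Yring := {mpoly F[#|yidx|]}.
Definition yvar (ji : yidx) : Yring := 'X_(enum_rank ji).
Definition ybul (j : 'I_n) : Yring := \sum_(i : 'I_(a j)) yvar (Tagged _ i).
Definition yent (j : 'I_n) (o : option 'I_(a j)) : Yring :=
  if o is Some i then yvar (Tagged _ i) else ybul j.

Definition sigmaD (J K : {set 'I_n}) (p : Sring J K) : Yring :=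
  p \mPo [tuple \prod_(j : 'I_n) yent (val (enum_val k) j) | k < #|Svars J K|].

Definition tauD (J K : {set 'I_n}) (p : Sring J K) : Rring :=
  p \mPo [tuple xsum (val (enum_val k)) | k < #|Svars J K|].

(* P_Delta R : ideal of R generated by tau_Delta(P_Delta), P_Delta = ker sigma_Delta *)
Definition PDeltaR (J K : {set 'I_n}) : Rring -> Prop :=
  ideal_gen (fun f => exists p : Sring J K, sigmaD p = 0 /\ f = tauD p).

End Tables.

(* Main.v *)
Require Import Defs.
From HB Require Import structures.
From mathcomp Require Import all_boot all_order all_algebra.
From mathcomp Require Import mpoly.
Set Implicit Arguments. Unset Strict Implicit. Unset Printing Implicit Defensive.
Import GRing.Theory.
Local Open Scope ring_scope.

Section IG.
Variable S : comNzRingType.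
Implicit Types (G H : S -> Prop) (f g : S).

Lemma ig_gen G f : G f -> ideal_gen G f.
Proof. by move=> Gf; exists [:: (1, f)]; split; [move=> pr; rewrite inE => /eqP -> | rewrite big_seq1 mul1r]. Qed.

Lemma ig0 G : ideal_gen G 0.
Proof. by exists [::]; split => //; rewrite big_nil. Qed.

Lemma igD G f g : ideal_gen G f -> ideal_gen G g -> ideal_gen G (f + g).
Proof.
move=> [s [Hs ->]] [t [Ht ->]]; exists (s ++ t); split; last by rewrite big_cat.
by move=> pr; rewrite mem_cat => /orP [/Hs|/Ht].
Qed.

Lemma igM G c f : ideal_gen G f -> ideal_gen G (c * f).
Proof.
move=> [s [Hs ->]]; exists [seq (c * pr.1, pr.2) | pr <- s]; split.
  by move=> pr /mapP [q /Hs Hq ->].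
by rewrite big_map big_distrr; apply: eq_bigr => pr _ /=; rewrite mulrA.
Qed.

Lemma ig_sum G (I : eqType) (r : seq I) (F : I -> S) :
  (forall k, k \in r -> ideal_gen G (F k)) -> ideal_gen G (\sum_(k <- r) F k).
Proof.
elim: r => [|x r IH] H; first by rewrite big_nil; exact: ig0.
rewrite big_cons; apply: igD; first by apply: H; rewrite inE eqxx.
by apply: IH => k kr; apply: H; rewrite inE kr orbT.
Qed.

Lemma ig_trans G H f : (forall g, G g -> ideal_gen H g) -> ideal_gen G f -> ideal_gen H f.
Proof.
move=> GH [s [Hs ->]]; apply: ig_sum => pr /Hs /GH; exact: igM.
Qed.
End IG.

Theorem lemma6p4 (F : fieldType) (n : nat) (a : 'I_n -> nat)
    (J K : {set 'I_n}) (i : 'I_n) (hi : i \in J :&: K) :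
  ideal_sub
    (ideal_mul (@Lideal F n a (K :\ i)) (@Lideal F n a J))
    (ideal_add (@PDeltaR F n a J K) (@Lideal F n a (J :\ i))).
Proof.
have key : forall sg tu : mtuple a, supp sg = K :\ i -> supp tu = J ->
   ideal_add (@PDeltaR F n a J K) (@Lideal F n a (J :\ i)) (xsum F sg * xsum F tu).
  move=> sg tu Hsg Htu.
  pose sg' : mtuple a := finfun (fun j => if j == i then tu j else sg j).
  pose tu' : mtuple a := finfun (fun j => if j == i then None else tu j).
  have Htu' : supp tu' = J :\ i.
    apply/setP => j; rewrite !inE ffunE -Htu inE.
    by case: (j == i).
  have Fsg : face2 J K (supp sg) by rewrite /face2 Hsg subD1set orbT.
  have Ftu : face2 J K (supp tu) by rewrite /face2 Htu subxx.
  have Fsg' : face2 J K (supp sg'); last have Ftu' : face2 J K (supp tu').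
    rewrite /face2; apply/orP; right; apply/subsetP => j.
    rewrite inE ffunE; have [-> _|ne] := eqVneq j i; first by move: hi; rewrite inE => /andP [].
   
    move=> h; have : j \in supp sg by rewrite inE.
    by rewrite Hsg inE => /andP [].
    by rewrite /face2 Htu' subD1set.
  pose v1 : Svars a J K := exist _ sg Fsg.
  pose v2 : Svars a J K := exist _ tu Ftu.
  pose v3 : Svars a J K := exist _ sg' Fsg'.
  pose v4 : Svars a J K := exist _ tu' Ftu'.
  pose p : Sring F a J K := 'X_(enum_rank v1) * 'X_(enum_rank v2)
                             - 'X_(enum_rank v3) * 'X_(enum_rank v4).
  have EX : forall (m : nat) (f : Svars a J K -> {mpoly F[m]}) v,
      ('X_(enum_rank v) : Sring F a J K) \mPo [tuple f (enum_val k) | k < #|Svars a J K|] = f v.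
    by move=> m f v; rewrite comp_mpolyXU -tnth_nth tnth_mktuple enum_rankK.
  have tp : tauD p = xsum F sg * xsum F tu - xsum F sg' * xsum F tu'.
    by rewrite /tauD /p rmorphB !rmorphM /= !(EX _ (fun v => xsum F (val v))).
  have sp : sigmaD p = 0.
    rewrite /sigmaD /p rmorphB !rmorphM /= !(EX _ (fun v => \prod_(j : 'I_n) yent F (val v j))) /=.
    apply/eqP; rewrite subr_eq0 -!big_split /=; apply/eqP/eq_bigr => j _.
    rewrite !ffunE; have [->|ne] := eqVneq j i; last by [].
    have -> : sg i = None.
      apply/eqP; have : i \notin supp sg by rewrite Hsg setD11.
      by rewrite inE negbK.
    by rewrite mulrC.
  have -> : xsum F sg * xsum F tu = tauD p + xsum F sg' * xsum F tu'.
    by rewrite tp subrK.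
  apply: igD; apply: ig_gen; [left | right].
    by apply: ig_gen; exists p.
  by apply: igM; apply: ig_gen; exists tu'.
move=> f; apply: ig_trans => _ [g [h [[s [Hs ->]] [t [Ht ->]] ->]]].
rewrite big_distrl /=; apply: ig_sum => pr /Hs [sg [Hsg ->]].
rewrite -mulrA; apply: igM.
rewrite big_distrr /=; apply: ig_sum => q /Ht [tu [Htu ->]].
rewrite mulrCA; apply: igM; exact: key.
Qed.
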